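(* Let $C\subset \mathbb{C}P^2$ be the Klein quartic $\{(X:Y:Z): X^3Y+Y^3Z+Z^3X=0\}$, with affine coordinates $x=X^3Y^{-2}Z^{-1}+1$, $y=-XY^{-1}$, so that $y^7=x(1-x)^2$ on $C$. Let $\zeta_7=\exp(2\pi\sqrt{-1}/7)$, let $e_0\colon[0,1]\to C$ be the path $e_0(t)=(t,\sqrt[7]{t(1-t)^2})$ (real nonnegative seventh root), let $\sigma\colon C\to C$ be the automorphism $\sigma(x,y)=(x,\zeta_7 y)$, and for $k=0,1,\dots,7$ let $\ell_k$ be the loop $\sigma^{k-1}_\ast(e_0)\cdot\sigma^{k}_\ast(e_0)^{-1}$ (first traverse $\sigma^{k-1}\circ e_0$, then $\sigma^k\circ e_0$ backwards). Let $\omega'_1=(1-x)\,dx/y^6$, $\omega'_2=(1-x)\,dx/y^5$, $\omega'_3=dx/y^3$, let $(h_1,h_2,h_3,h_4)=(1/7,2/7,4/7,1/7)$ and $\xi_i=\zeta_7^{7h_i}$. Then for $i=1,2,3$ and every $k$, $$\int_{\ell_k}\omega'_i=(\xi_i^{k-1}-\xi_i^{k})\,B(h_i,h_{i+1}),$$ where $B(u,v)=\int_0^1 t^{u-1}(1-t)^{v-1}\,dt$ is the beta function.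
   Context: The forms $\omega'_1,\omega'_2,\omega'_3$ form a basis of the holomorphic $1$-forms on the genus-$3$ curve $C$. Thus $\xi_1=\zeta_7$, $\xi_2=\zeta_7^2$, $\xi_3=\zeta_7^4$. *)

(* Defs.v *)
From Stdlib Require Import Reals ZArith.
From Coquelicot Require Export Coquelicot.
Open Scope R_scope.

Definition Cpowz (z : C) (n : Z) : C :=
  match n with
  | Z0 => RtoC 1
  | Zpos p => Cpow z (Pos.to_nat p)
  | Zneg p => Cinv (Cpow z (Pos.to_nat p))
  end.

Definition zeta7 : C := (cos (2 * PI / 7), sin (2 * PI / 7)).

Definition klein_quartic (X Y Z : C) : Prop :=
  (Cpow X 3 * Y + Cpow Y 3 * Z + Cpow Z 3 * X)%C = RtoC 0.
Definition affine_coords (X Y Z : C) : C * C :=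
  ((Cpow X 3 / (Cpow Y 2 * Z) + RtoC 1)%C, (- (X / Y))%C).
Definition klein_affine (p : C * C) : Prop :=
  Cpow (snd p) 7 = (fst p * Cpow (RtoC 1 - fst p) 2)%C.

Definition sigma (p : C * C) : C * C := (fst p, (zeta7 * snd p)%C).
Definition sigma_pow (j : Z) (p : C * C) : C * C := (fst p, (Cpowz zeta7 j * snd p)%C).

Definition root7 (a : R) : R := if Rlt_dec 0 a then Rpower a (1/7) else 0.

Definition e0 (t : R) : C * C := (RtoC t, RtoC (root7 (t * (1 - t) ^ 2))).

(* A path is gamma : R -> C*C considered on [0,1]; the forms have poles at
   the endpoints, so the integral is the improper integral over (0,1):
   int_gamma f dx = lim int_a^b f(gamma t) (x o gamma)'(t) dt, a->0+, b->1-. *)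
Definition is_line_int (f : C * C -> C) (gamma : R -> C * C) (v : C) : Prop :=
  exists dx : R -> C,
    (forall t, 0 < t < 1 ->
       @is_derive R_AbsRing C_R_NormedModule (fun s => fst (gamma s)) t (dx t)) /\
    @is_RInt_gen C_R_NormedModule (fun t => (dx t * f (gamma t))%C)
      (at_right 0) (at_left 1) v.

(* Integral along the composite loop gamma1 . gamma2^{-1}
   (first gamma1, then gamma2 backwards). *)
Definition is_loop_int (f : C * C -> C) (gamma1 gamma2 : R -> C * C) (v : C) : Prop :=
  exists v1 v2, is_line_int f gamma1 v1 /\ is_line_int f gamma2 v2 /\ v = (v1 - v2)%C.

Definition is_int_over_lk (f : C * C -> C) (k : Z) (v : C) : Prop :=
  is_loop_int f (fun t => sigma_pow (k - 1) (e0 t)) (fun t => sigma_pow k (e0 t)) v.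

(* The forms omega'_1 = (1-x)dx/y^6, omega'_2 = (1-x)dx/y^5, omega'_3 = dx/y^3
   (coefficient of dx). *)
Definition omega' (i : nat) (p : C * C) : C :=
  match i with
  | 1%nat => ((RtoC 1 - fst p) / Cpow (snd p) 6)%C
  | 2%nat => ((RtoC 1 - fst p) / Cpow (snd p) 5)%C
  | 3%nat => (RtoC 1 / Cpow (snd p) 3)%C
  | _ => RtoC 0
  end.

Definition seven_h (i : nat) : Z :=
  match i with 1%nat => 1%Z | 2%nat => 2%Z | 3%nat => 4%Z | 4%nat => 1%Z | _ => 0%Z end.
Definition h (i : nat) : R := IZR (seven_h i) / 7.
Definition xi (i : nat) : C := Cpowz zeta7 (seven_h i).

Definition Beta (u v : R) : R :=
  RInt_gen (fun t => Rpower t (u - 1) * Rpower (1 - t) (v - 1)) (at_right 0) (at_left 1).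

(* Main.v *)
Require Import Defs.
From Stdlib Require Import Reals ZArith Lra Lia.
From Coquelicot Require Import Coquelicot.


Definition bf (a b t : R) := Rpower t (a-1) * Rpower (1-t) (b-1).

Lemma exp_le' x y : x <= y -> exp x <= exp y.
Proof. intros [H|H]. left; apply exp_increasing; auto. subst; lra. Qed.

Lemma bf_pos a b t : 0 <= bf a b t.
Proof. unfold bf, Rpower. apply Rmult_le_pos; left; apply exp_pos. Qed.

Lemma bf_cont a b t : 0<t<1 -> continuous (bf a b) t.
Proof. intros H. apply (@ex_derive_continuous R_AbsRing R_NormedModule). unfold bf, Rpower. auto_derive. lra. Qed.

Lemma bf_ex a b x y : 0<x<1 -> 0<y<1 -> ex_RInt (bf a b) x y.
Proof. intros. apply (@ex_RInt_continuous R_CompleteNormedModule). intros z Hz. apply bf_cont.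
  unfold Rmin, Rmax in Hz; destruct (Rle_dec x y); lra. Qed.

Lemma exp_pred c u : 0 < u -> exp ((c-1) * ln u) = exp (c * ln u) / u.
Proof. intros Hu. replace ((c-1)*ln u) with (c * ln u + - ln u) by ring.
  rewrite exp_plus, exp_Ropp, exp_ln by auto. field. lra. Qed.

Lemma exp_bound2 c L : -1 <= c <= 0 -> -ln 2 <= L <= 0 -> exp (c * L) <= 2.
Proof. intros. rewrite <- (exp_ln 2) by lra. apply exp_le'. nra. Qed.

Lemma ln_half_bound u : 1/2 <= u <= 1 -> -ln 2 <= ln u <= 0.
Proof. intros. split.
  - replace (- ln 2) with (ln (/2)) by (rewrite ln_Rinv; lra). apply ln_le; lra.
  - rewrite <- ln_1. apply ln_le; lra. Qed.

Lemma bf_le_left a b t : 0 <= b <= 1 -> 0 < t <= 1/2 -> bf a b t <= 2 * Rpower t (a-1).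
Proof. intros Hb Ht. unfold bf. rewrite Rmult_comm. apply Rmult_le_compat_r.
  unfold Rpower; left; apply exp_pos.
  unfold Rpower. apply exp_bound2. lra. apply ln_half_bound. lra. Qed.

Lemma bf_le_right a b t : 0 <= a <= 1 -> 1/2 <= t < 1 -> bf a b t <= 2 * Rpower (1-t) (b-1).
Proof. intros Ha Ht. unfold bf. apply Rmult_le_compat_r.
  unfold Rpower; left; apply exp_pos.
  unfold Rpower. apply exp_bound2. lra. apply ln_half_bound. lra. Qed.

Lemma minus_R (u v : R) : minus u v = u - v.
Proof. reflexivity. Qed.

Lemma int_left a b x y : 0 < a -> 0 <= b <= 1 -> 0 < x <= y -> y <= 1/2 ->
  RInt (bf a b) x y <= 2/a * Rpower y a.
Proof.
  intros Ha Hb Hx Hy.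
  assert (HI : is_RInt (fun t => 2 * Rpower t (a-1)) x y
     (minus ((fun s => 2/a * Rpower s a) y) ((fun s => 2/a * Rpower s a) x))).
  { apply (@is_RInt_derive R_CompleteNormedModule (fun s => 2/a * Rpower s a)).
    - intros z Hz. unfold Rmin, Rmax in Hz; destruct (Rle_dec x y); try lra.
      unfold Rpower. auto_derive. lra.
      rewrite exp_pred by lra. field. lra.
    - intros z Hz. unfold Rmin, Rmax in Hz; destruct (Rle_dec x y); try lra.
      apply (@ex_derive_continuous R_AbsRing R_NormedModule). unfold Rpower. auto_derive. lra. }
  apply Rle_trans with (RInt (fun t => 2 * Rpower t (a-1)) x y).
  - apply RInt_le. lra. apply bf_ex; lra. eexists; eauto.
    intros t Ht. apply bf_le_left; lra.
  - rewrite (is_RInt_unique _ _ _ _ HI). rewrite minus_R.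
    assert (0 < Rpower x a) by (unfold Rpower; apply exp_pos).
    assert (0 < 2/a) by (apply Rdiv_lt_0_compat; lra). nra.
Qed.

Lemma int_right a b x y : 0 <= a <= 1 -> 0 < b -> 1/2 <= x <= y -> y < 1 ->
  RInt (bf a b) x y <= 2/b * Rpower (1-x) b.
Proof.
  intros Ha Hb Hx Hy.
  assert (HI : is_RInt (fun t => 2 * Rpower (1-t) (b-1)) x y
     (minus ((fun s => -(2/b) * Rpower (1-s) b) y) ((fun s => -(2/b) * Rpower (1-s) b) x))).
  { apply (@is_RInt_derive R_CompleteNormedModule (fun s => -(2/b) * Rpower (1-s) b)).
    - intros z Hz. unfold Rmin, Rmax in Hz; destruct (Rle_dec x y); try lra.
      unfold Rpower. auto_derive. lra.
      replace (1 + - z) with (1 - z) by ring. rewrite exp_pred by lra. field. lra.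
    - intros z Hz. unfold Rmin, Rmax in Hz; destruct (Rle_dec x y); try lra.
      apply (@ex_derive_continuous R_AbsRing R_NormedModule). unfold Rpower. auto_derive. lra. }
  apply Rle_trans with (RInt (fun t => 2 * Rpower (1-t) (b-1)) x y).
  - apply RInt_le. lra. apply bf_ex; lra. eexists; eauto.
    intros t Ht. apply bf_le_right; lra.
  - rewrite (is_RInt_unique _ _ _ _ HI). rewrite minus_R.
    assert (0 < Rpower (1-y) b) by (unfold Rpower; apply exp_pos).
    assert (0 < 2/b) by (apply Rdiv_lt_0_compat; lra). nra.
Qed.

Lemma RInt_bf_nonneg a b x y : 0 < x <= y -> y < 1 -> 0 <= RInt (bf a b) x y.
Proof. intros. apply Rle_trans with (RInt (fun _ => 0) x y).
  rewrite RInt_const. unfold scal; simpl; unfold mult; simpl. lra.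
  apply RInt_le. lra. apply ex_RInt_const. apply bf_ex; lra. intros; apply bf_pos. Qed.

Lemma opp_R (u : R) : opp u = - u.
Proof. reflexivity. Qed.

Lemma abs_left a b x y : 0<a -> 0<=b<=1 -> 0<x<=1/2 -> 0<y<=1/2 ->
  Rabs (RInt (bf a b) x y) <= 2/a * Rpower (Rmax x y) a.
Proof. intros. unfold Rmax. destruct (Rle_dec x y).
  - rewrite Rabs_pos_eq. apply int_left; lra. apply RInt_bf_nonneg; lra.
  - rewrite <- opp_RInt_swap by (apply bf_ex; lra). rewrite opp_R, Rabs_Ropp.
    rewrite Rabs_pos_eq. apply int_left; lra. apply RInt_bf_nonneg; lra. Qed.

Lemma abs_right a b x y : 0<=a<=1 -> 0<b -> 1/2<=x<1 -> 1/2<=y<1 ->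
  Rabs (RInt (bf a b) x y) <= 2/b * Rpower (1 - Rmin x y) b.
Proof. intros. unfold Rmin. destruct (Rle_dec x y).
  - rewrite Rabs_pos_eq. apply int_right; lra. apply RInt_bf_nonneg; lra.
  - rewrite <- opp_RInt_swap by (apply bf_ex; lra). rewrite opp_R, Rabs_Ropp.
    rewrite Rabs_pos_eq. apply int_right; lra. apply RInt_bf_nonneg; lra. Qed.

Lemma ball_R (x e y : R) : ball x e y <-> Rabs (y - x) < e.
Proof. split; intro H; exact H. Qed.

Lemma Rpower_le_l u v c : 0 < c -> 0 < u <= v -> Rpower u c <= Rpower v c.
Proof. intros Hc [Hu [H|H]]. left; apply Rlt_Rpower_l; lra. subst; lra. Qed.

Lemma small_pow c e : 0<c -> 0<e -> exists d, 0<d<=1/2 /\ forall u, 0<u<=d -> 2/c*Rpower u c < e.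
Proof. intros Hc He.
  set (K := Rpower (c*e/4) (1/c)).
  assert (HK : 0 < K) by (unfold K, Rpower; apply exp_pos).
  exists (Rmin (1/2) K). split. split. apply Rmin_glb_lt; lra. apply Rmin_l.
  intros u Hu.
  assert (Hle : Rpower u c <= c*e/4).
  { apply Rle_trans with (Rpower K c). apply Rpower_le_l. auto.
    split. lra. apply Rle_trans with (1:=proj2 Hu). apply Rmin_r.
    unfold K. rewrite Rpower_mult. replace (1/c*c) with 1 by (field; lra).
    rewrite Rpower_1. lra. nra. }
  apply Rle_lt_trans with (2/c*(c*e/4)).
  apply Rmult_le_compat_l. left; apply Rdiv_lt_0_compat; lra. auto.
  replace (2/c*(c*e/4)) with (e/2) by (field; lra). lra. Qed.

Lemma bf_ex_gen a b : 0<a<=1 -> 0<b<=1 -> ex_RInt_gen (bf a b) (at_right 0) (at_left 1).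
Proof.
  intros Ha Hb.
  set (I := fun ab : R*R => RInt (bf a b) (fst ab) (snd ab)).
  assert (Hl : exists l : R_CompleteSpace, filterlim I (filter_prod (at_right 0) (at_left 1)) (locally l)).
  { apply (filterlim_locally_cauchy (U := R_CompleteSpace)).
    intros [eps Heps].
    destruct (small_pow a (eps/2)) as [d1 [Hd1 H1]]; try lra.
    destruct (small_pow b (eps/2)) as [d2 [Hd2 H2]]; try lra.
    exists (fun ab => 0 < fst ab < d1 /\ 1 - d2 < snd ab < 1). split.
    - apply Filter_prod with (fun x => 0<x<d1) (fun y => 1-d2<y<1).
      + assert (Hp : 0 < d1) by lra. exists (mkposreal d1 Hp). intros y By Hy.
        pose proof (proj1 (ball_R _ _ _) By) as B. apply Rabs_def2 in B. simpl in B. lra.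
      + assert (Hp : 0 < d2) by lra. exists (mkposreal d2 Hp). intros y By Hy.
        pose proof (proj1 (ball_R _ _ _) By) as B. apply Rabs_def2 in B. simpl in B. lra.
      + simpl; tauto.
    - intros [u1 v1] [u2 v2] [Hu1 Hv1] [Hu2 Hv2]; simpl in *.
      apply ball_R. unfold I; simpl.
      assert (E : RInt (bf a b) u2 v2 = RInt (bf a b) u2 u1 + RInt (bf a b) u1 v1 + RInt (bf a b) v1 v2).
      { rewrite <- (@RInt_Chasles R_CompleteNormedModule (bf a b) u2 u1 v2) by (apply bf_ex; lra).
        rewrite <- (@RInt_Chasles R_CompleteNormedModule (bf a b) u1 v1 v2) by (apply bf_ex; lra).
        unfold plus; simpl. ring. }
      rewrite E. replace (RInt (bf a b) u2 u1 + RInt (bf a b) u1 v1 + RInt (bf a b) v1 v2 - RInt (bf a b) u1 v1)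
        with (RInt (bf a b) u2 u1 + RInt (bf a b) v1 v2) by ring.
      apply Rle_lt_trans with (1 := Rabs_triang _ _).
      replace eps with (eps/2 + eps/2) by field.
      apply Rplus_lt_le_compat.
      + eapply Rle_lt_trans. apply abs_left; lra.
        apply H1. unfold Rmax; destruct (Rle_dec u2 u1); lra.
      + left. eapply Rle_lt_trans. apply abs_right; lra.
        apply H2. unfold Rmin; destruct (Rle_dec v1 v2); lra. }
  destruct Hl as [l Hl]. exists l. intros P HP. unfold filtermapi.
  apply filter_imp with (fun ab => P (I ab) /\ (0 < fst ab < 1 /\ 0 < snd ab < 1)).
  - intros [u v] [HP' Hd]. exists (I (u,v)). split; auto. unfold I; simpl.
    apply (@RInt_correct R_CompleteNormedModule), bf_ex; tauto.
  - apply filter_and. apply Hl, HP.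
    apply Filter_prod with (fun x => 0<x<1) (fun y => 0<y<1).
    + exists (mkposreal 1 Rlt_0_1). intros y By Hy.
      pose proof (proj1 (ball_R _ _ _) By) as B. apply Rabs_def2 in B. simpl in B. lra.
    + exists (mkposreal 1 Rlt_0_1). intros y By Hy.
      pose proof (proj1 (ball_R _ _ _) By) as B. apply Rabs_def2 in B. simpl in B. lra.
    + simpl; tauto.
Qed.


Open Scope C_scope.

Lemma demoivre x n : Cpow (cos x, sin x) n = (cos (INR n * x), sin (INR n * x)).
Proof. induction n.
  - simpl. rewrite Rmult_0_l, cos_0, sin_0. reflexivity.
  - rewrite Cpow_S, IHn. rewrite S_INR. unfold Cmult; simpl.
    replace ((INR n + 1) * x)%R with (x + INR n * x)%R by ring.
    rewrite cos_plus, sin_plus. f_equal; ring. Qed.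

Lemma zeta7_pow7 : Cpow zeta7 7 = 1.
Proof. unfold zeta7. rewrite demoivre.
  replace (INR 7 * (2 * PI / 7))%R with (2*PI)%R by (simpl; field).
  rewrite cos_2PI, sin_2PI. reflexivity. Qed.

Lemma C1_neq_0 : RtoC 1 <> RtoC 0.
Proof. intro H. apply (f_equal fst) in H. simpl in H. lra. Qed.

Lemma pow7_nz w : Cpow w 7 = 1 -> w <> 0.
Proof. intros H E. subst. simpl in H. rewrite Cmult_0_l in H. apply C1_neq_0. auto. Qed.

Lemma Cpowz_pow7 j : Cpow (Cpowz zeta7 j) 7 = 1.
Proof. destruct j as [|p|p]; simpl Cpowz.
  - apply Cpow_1_l.
  - rewrite <- Cpow_mult_r, Nat.mul_comm, Cpow_mult_r, zeta7_pow7. apply Cpow_1_l.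
  - rewrite Cpow_inv by (apply Cpow_nz, pow7_nz, zeta7_pow7).
    rewrite <- Cpow_mult_r, Nat.mul_comm, Cpow_mult_r, zeta7_pow7, Cpow_1_l.
    field; apply C1_neq_0. Qed.

Lemma Cpowz_comm j s : Cpow (Cpowz zeta7 j) s = Cpowz (Cpow zeta7 s) j.
Proof. destruct j as [|p|p]; simpl Cpowz.
  - apply Cpow_1_l.
  - rewrite <- !Cpow_mult_r, Nat.mul_comm. reflexivity.
  - rewrite Cpow_inv by (apply Cpow_nz, pow7_nz, zeta7_pow7).
    rewrite <- !Cpow_mult_r, Nat.mul_comm. reflexivity. Qed.

Lemma key (w B R6 N : C) (m s : nat) : Cpow w (m + s) = 1 -> R6 <> 0 -> N = B * R6 ->
  RtoC 1 * (N / (Cpow w m * R6)) = Cpow w s * B.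
Proof. intros H HR HN. subst N. rewrite Cpow_add_r in H.
  assert (Hm : Cpow w m <> 0).
  { intro E. rewrite E, Cmult_0_l in H. apply C1_neq_0. auto. }
  assert (Hinv : / Cpow w m = Cpow w s).
  { transitivity (/ Cpow w m * (Cpow w m * Cpow w s)). rewrite H; ring. field; auto. }
  rewrite <- Hinv. field. auto. Qed.

Lemma exp_pow' x n : (exp x ^ n)%R = exp (INR n * x).
Proof. induction n. simpl. rewrite Rmult_0_l, exp_0. reflexivity.
  rewrite <- tech_pow_Rmult, IHn, S_INR, <- exp_plus. f_equal. ring. Qed.

Lemma root7_pos t : (0 < t < 1)%R -> (0 < root7 (t * (1-t)^2))%R.
Proof. intros. unfold root7. destruct (Rlt_dec 0 (t*(1-t)^2)). unfold Rpower; apply exp_pos.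
  exfalso. apply n. apply Rmult_lt_0_compat. lra. apply pow_lt. lra. Qed.

Lemma bf_root a b t n : (0<t<1)%R -> (bf a b t * root7 (t*(1-t)^2) ^ n)%R =
  exp ((a-1 + INR n/7) * ln t + (b-1 + 2*INR n/7) * ln (1-t)).
Proof. intros Ht. unfold bf, root7. destruct (Rlt_dec 0 (t*(1-t)^2)).
  2:{ exfalso. apply n0. apply Rmult_lt_0_compat. lra. apply pow_lt. lra. }
  unfold Rpower. rewrite ln_mult, ln_pow by (try apply pow_lt; lra).
  rewrite exp_pow', <- !exp_plus. f_equal.
  replace (INR 2) with 2%R by (simpl; ring). field. Qed.



Lemma scal_C (y : R) (c : C) : scal y c = c * RtoC y.
Proof. destruct c. unfold scal; simpl. unfold Cmult, RtoC, mult; simpl. unfold prod_scal; simpl. unfold scal; simpl. unfold mult; simpl. f_equal; ring. Qed.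

Lemma lin_deriv (c : C) t : @is_derive R_AbsRing C_R_NormedModule (fun s => c * RtoC s) t c.
Proof. apply (@is_derive_ext R_AbsRing C_R_NormedModule (fun s => scal s c)). intro; apply scal_C.
  unfold is_derive. apply filterdiff_linear, is_linear_scal_l. Qed.

Lemma lift_gen (f : R -> R) (c : C) l : is_RInt_gen f (at_right 0) (at_left 1) l ->
  is_RInt_gen (fun t => c * RtoC (f t)) (at_right 0) (at_left 1) (c * RtoC l).
Proof.
  intros H P HP.
  assert (Hc : continuous (fun y : R => c * RtoC y) l).
  { apply (@ex_derive_continuous R_AbsRing C_R_NormedModule). exists c. apply lin_deriv. }
  specialize (H (fun y => P (c * RtoC y)) (Hc P HP)).
  unfold filtermapi in *.
  eapply filter_imp. 2: exact H.
  intros [a b] [y [Hy Py]]. exists (c * RtoC y). split; auto. simpl in *.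
  destruct c as [c1 c2].
  apply (is_RInt_ext (fun t => ((c1 * f t)%R, (c2 * f t)%R))).
  { intros; unfold Cmult, RtoC; simpl; f_equal; ring. }
  replace ((c1, c2) * RtoC y) with ((c1 * y)%R, (c2 * y)%R) by (unfold Cmult, RtoC; simpl; f_equal; ring).
  apply (is_RInt_fct_extend_pair (U:=R_NormedModule) (V:=R_NormedModule)); simpl;
    apply (is_RInt_scal (V:=R_NormedModule)); auto.
Qed.

Lemma RtoC_deriv t : @is_derive R_AbsRing C_R_NormedModule (fun s => RtoC s) t (RtoC 1).
Proof. apply (@is_derive_ext R_AbsRing C_R_NormedModule (fun s => RtoC 1 * RtoC s)).
  intro; apply Cmult_1_l. apply lin_deriv. Qed.

Lemma rpow_nz r n : (0 < r)%R -> RtoC (r ^ n) <> 0.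
Proof. intros Hr E. apply (f_equal fst) in E. simpl in E. assert (0 < r ^ n)%R by (apply pow_lt; auto). lra. Qed.

Lemma line_int i j : (1 <= i <= 3)%nat ->
  is_line_int (omega' i) (fun t => sigma_pow j (e0 t)) (Cpowz (xi i) j * RtoC (Beta (h i) (h (S i)))).
Proof.
  intros Hi. exists (fun _ => RtoC 1). split.
  - intros t _. simpl. apply RtoC_deriv.
  - assert (HB : is_RInt_gen (bf (h i) (h (S i))) (at_right 0) (at_left 1) (Beta (h i) (h (S i)))).
    { unfold Beta. apply (RInt_gen_correct (V:=R_CompleteNormedModule)).
      apply bf_ex_gen; destruct i as [|[|[|[|]]]]; try lia; unfold h, seven_h; simpl; lra. }
    apply (is_RInt_gen_ext (fun t => Cpowz (xi i) j * RtoC (bf (h i) (h (S i)) t))).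
    2: apply lift_gen; auto.
    apply Filter_prod with (fun x => 0<x<1)%R (fun y => 0<y<1)%R.
    + exists (mkposreal 1 Rlt_0_1). intros y By Hy.
      pose proof (proj1 (ball_R _ _ _) By) as B. apply Rabs_def2 in B. simpl in B. lra.
    + exists (mkposreal 1 Rlt_0_1). intros y By Hy.
      pose proof (proj1 (ball_R _ _ _) By) as B. apply Rabs_def2 in B. simpl in B. lra.
    + intros u v Hu Hv x Hx. simpl in Hx.
      assert (Hx' : (0 < x < 1)%R).
      { unfold Rmin, Rmax in Hx. destruct (Rle_dec u v); lra. }
      assert (Hr := root7_pos x Hx').
      symmetry. unfold xi. unfold omega', sigma_pow, e0. cbn [fst snd].
      destruct i as [|[|[|[|]]]]; try lia.
      * change (Cpowz zeta7 (seven_h 1)) with (Cpow zeta7 1).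
        rewrite <- Cpowz_comm, Cpow_mult_l, <- RtoC_pow.
        apply key. apply Cpowz_pow7. apply rpow_nz; auto.
        rewrite <- RtoC_minus, <- RtoC_mult. f_equal. rewrite bf_root by auto.
        unfold h, seven_h. rewrite <- (exp_ln (1-x)) at 1 by lra. f_equal. simpl INR. field.
      * change (Cpowz zeta7 (seven_h 2)) with (Cpow zeta7 2).
        rewrite <- Cpowz_comm, Cpow_mult_l, <- RtoC_pow.
        apply key. apply Cpowz_pow7. apply rpow_nz; auto.
        rewrite <- RtoC_minus, <- RtoC_mult. f_equal. rewrite bf_root by auto.
        unfold h, seven_h. rewrite <- (exp_ln (1-x)) at 1 by lra. f_equal. simpl INR. field.
      * change (Cpowz zeta7 (seven_h 3)) with (Cpow zeta7 4).
        rewrite <- Cpowz_comm, Cpow_mult_l, <- RtoC_pow.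
        apply key. apply Cpowz_pow7. apply rpow_nz; auto.
        rewrite <- RtoC_mult. f_equal. rewrite bf_root by auto.
        unfold h, seven_h. replace (exp _) with (exp 0) by (f_equal; simpl INR; field). symmetry; apply exp_0.
Qed.

Close Scope C_scope.

Theorem lemma4p1 :
  forall (i : nat) (k : Z),
    (1 <= i <= 3)%nat -> (0 <= k <= 7)%Z ->
    is_int_over_lk (omega' i) k
      ((Cpowz (xi i) (k - 1) - Cpowz (xi i) k) * RtoC (Beta (h i) (h (S i))))%C.
Proof.
  intros i k Hi Hk. unfold is_int_over_lk, is_loop_int.
  exists (Cpowz (xi i) (k-1) * RtoC (Beta (h i) (h (S i))))%C, (Cpowz (xi i) k * RtoC (Beta (h i) (h (S i))))%C.
  split. apply line_int; auto. split. apply line_int; auto. ring.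
Qed.
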